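(* Let $\mathbb{K}=(G,M,I)$ be a finite formal context and let $\mathcal{I}_P=\bigcup_{B\in\mathcal{C}} pKey(B)$ be the set of all passkeys (of all closed itemsets) of $\mathbb{K}$. Then $\mathcal{I}_P$ is an order ideal of $(2^M,\subseteq)$: if $X\in\mathcal{I}_P$ and $Y\subseteq X$, then $Y\in\mathcal{I}_P$, i.e. $Y$ is a passkey of the closed itemset $Y''$.
   Context: A formal context is a triple $(G,M,I)$ with $I\subseteq G\times M$. For $A\subseteq G$, $A'=\{m\in M\mid \forall g\in A:(g,m)\in I\}$; for $B\subseteq M$, $B'=\{g\in G\mid \forall m\in B:(g,m)\in I\}$. An itemset $B\subseteq M$ is closed if $B''=B$; $\mathcal{C}$ denotes the set of all closed itemsets. For a closed itemset $B$, its equivalence class is $Equiv(B)=\{Y\subseteq B\mid Y'=B'\}$. A key of $B$ is an itemset $X\in Equiv(B)$ such that $Y'\neq X'$ for every proper subset $Y\subsetneq X$; $Key(B)$ is the set of keys of $B$. A passkey of $B$ is a key of $B$ of minimum cardinality among all keys of $B$; $pKey(B)=\{X\in Key(B)\mid |X|=\min_{Y\in Key(B)}|Y|\}$. An order ideal of a poset $(P,\le)$ is a subset $\mathcal{I}\subseteq P$ such that $x\in\mathcal{I}$ and $y\le x$ imply $y\in\mathcal{I}$. *)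

(* Defs.v *)
From mathcomp Require Import all_boot.
Set Implicit Arguments. Unset Strict Implicit. Unset Printing Implicit Defensive.

Section FCA.
Variables (G M : finType) (I : G -> M -> bool).

Definition fca_ext (B : {set M}) : {set G} := [set g | [forall m in B, I g m]].
Definition fca_int (A : {set G}) : {set M} := [set m | [forall g in A, I g m]].

Definition fca_closure (B : {set M}) : {set M} := fca_int (fca_ext B).
Definition fca_closed (B : {set M}) : bool := fca_closure B == B.

Definition Equiv (B : {set M}) : {set {set M}} :=
  [set Y : {set M} | (Y \subset B) && (fca_ext Y == fca_ext B)].

Definition Key (B : {set M}) : {set {set M}} :=
  [set X : {set M} in Equiv B | [forall Y : {set M}, (Y \proper X) ==> (fca_ext Y != fca_ext X)]].

Definition pKey (B : {set M}) : {set {set M}} :=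
  [set X : {set M} in Key B | [forall Y : {set M} in Key B, #|X| <= #|Y|]].

Definition passkeys : {set {set M}} :=
  \bigcup_(B | fca_closed B) pKey B.

End FCA.

Definition order_ideal (M : finType) (F : {set {set M}}) : Prop :=
  forall X Y : {set M}, X \in F -> Y \subset X -> Y \in F.

(* Main.v *)
Require Import Defs.
From mathcomp Require Import all_boot.
Set Implicit Arguments. Unset Strict Implicit. Unset Printing Implicit Defensive.

Section Aux.
Variables (G M : finType) (I : G -> M -> bool).

Lemma extS (A B : {set M}) : A \subset B -> fca_ext I B \subset fca_ext I A.
Proof.
move=> AB; apply/subsetP=> g; rewrite !inE => /forallP H.
apply/forallP=> m; apply/implyP=> mA; have := H m; rewrite (subsetP AB) //.
Qed.

Lemma extU (A B : {set M}) : fca_ext I (A :|: B) = fca_ext I A :&: fca_ext I B.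
Proof.
apply/setP=> g; rewrite !inE; apply/forallP/andP.
- move=> H; split; apply/forallP=> m; apply/implyP=> mm; have := H m;
  by rewrite inE mm ?orbT.
- case=> /forallP H1 /forallP H2 m; apply/implyP; rewrite inE => /orP[] mm.
  + by have := H1 m; rewrite mm.
  + by have := H2 m; rewrite mm.
Qed.

Lemma sub_clos (B : {set M}) : B \subset fca_closure I B.
Proof.
apply/subsetP=> m mB; rewrite inE; apply/forallP=> g; apply/implyP.
by rewrite inE => /forallP/(_ m); rewrite mB.
Qed.

Lemma ext_clos (B : {set M}) : fca_ext I (fca_closure I B) = fca_ext I B.
Proof.
apply/eqP; rewrite eqEsubset extS ?sub_clos //=.
apply/subsetP=> g gB; rewrite inE; apply/forallP=> m; apply/implyP.
by rewrite inE => /forallP/(_ g); rewrite gB.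
Qed.

Lemma closS (A B : {set M}) : A \subset B -> fca_closure I A \subset fca_closure I B.
Proof.
move=> AB; apply/subsetP=> m; rewrite !inE => /forallP H.
apply/forallP=> g; apply/implyP=> gB; have := H g.
by rewrite (subsetP (extS AB)).
Qed.

Lemma exists_key (B : {set M}) n (W : {set M}) : #|W| <= n -> W \in Equiv I B ->
  exists K, K \in Key I B /\ K \subset W.
Proof.
elim: n W => [|n IH] W.
  rewrite leqn0 cards_eq0 => /eqP -> H0; exists set0; split => //.
  rewrite inE H0 /=; apply/forallP=> Y; apply/implyP=> /properP[_ [x]].
  by rewrite inE.
move=> Wn WE.
case: (boolP [forall Y : {set M}, (Y \proper W) ==> (fca_ext I Y != fca_ext I W)]) => H.
  by exists W; rewrite inE WE H.
move: H; rewrite negb_forall => /existsP[Y]; rewrite negb_imply negbK => /andP[YW /eqP YWe].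
have YE : Y \in Equiv I B.
  move: WE; rewrite !inE => /andP[WB /eqP WBe]; rewrite YWe WBe eqxx andbT.
  exact: subset_trans (proper_sub YW) WB.
have [K [KK KY]] := IH Y (leq_trans (proper_card YW) Wn) YE.
by exists K; split => //; apply: subset_trans KY (proper_sub YW).
Qed.

End Aux.

Theorem proposition2 (G M : finType) (I : G -> M -> bool) :
  order_ideal (passkeys I) /\
  (forall X Y : {set M}, X \in passkeys I -> Y \subset X ->
     Y \in passkeys I /\ Y \in pKey I (fca_closure I Y)).
Proof.
have main : forall X Y : {set M}, X \in passkeys I -> Y \subset X ->
     Y \in pKey I (fca_closure I Y).
  move=> X Y /bigcupP[B Bc XP] YX.
  move: XP; rewrite inE => /andP[XK /forallP Xmin].
  move: (XK); rewrite inE => /andP[XE /forallP Xkey].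
  move: XE; rewrite inE => /andP[XB /eqP XBe].
  have Bcl : fca_closure I B = B by apply/eqP.
  set D := X :\: Y.
  have XYD : X = Y :|: D.
    apply/setP=> x; rewrite !inE; case xY: (x \in Y); last by [].
    by rewrite (subsetP YX).
  have YD0 : Y :&: D = set0.
    by apply/setP=> x; rewrite !inE; case: (x \in Y).
  have cX : #|X| = #|Y| + #|D| by rewrite -cardsUI YD0 cards0 addn0 -XYD.
  have YB1 : fca_closure I Y \subset B.
    rewrite -Bcl /fca_closure -XBe; exact: (@closS G M I Y X YX).
  have YEq : Y \in Equiv I (fca_closure I Y) by rewrite inE sub_clos ext_clos eqxx.
  have YKey : Y \in Key I (fca_closure I Y).
    rewrite inE YEq /=; apply/forallP=> Z; apply/implyP=> ZY; apply/negP=> /eqP ZYe.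
    have := Xkey (Z :|: D); rewrite XYD !extU ZYe eqxx implybF.
    move/properP: ZY => [ZsY [y yY yZ]].
    have -> // : Z :|: D \proper Y :|: D.
    apply/properP; split; first by rewrite setSU.
    by exists y; rewrite ?inE ?yY ?(negbTE yZ).
  rewrite inE YKey /=; apply/forallP=> Z; apply/implyP=> ZK.
  rewrite leqNgt; apply/negP=> ZY.
  move: ZK; rewrite inE => /andP; rewrite inE => -[/andP[ZB1 /eqP Ze] _].
  rewrite ext_clos in Ze.
  have WE : Z :|: D \in Equiv I B.
    rewrite inE subUset (subset_trans ZB1 YB1) (subset_trans (subsetDl X Y) XB) /=.
    by rewrite extU Ze -extU -XYD XBe.
  have [K [KK KW]] := exists_key (leqnn _) WE.
  have := Xmin K; rewrite KK /= => Hk.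
  have : #|K| < #|X|.
    apply: (leq_ltn_trans (subset_leq_card KW)).
    apply: (leq_ltn_trans (leq_card_setU _ _)).
    by rewrite cX ltn_add2r.
  by rewrite ltnNge Hk.
have clc : forall Y : {set M}, fca_closed I (fca_closure I Y).
  by move=> Y; apply/eqP; rewrite {1}/fca_closure ext_clos.
have inP : forall X Y : {set M}, X \in passkeys I -> Y \subset X -> Y \in passkeys I.
  move=> X Y XP YX; apply/bigcupP; exists (fca_closure I Y); first exact: clc.
  exact: (main X Y).
split; first exact: inP.
move=> X Y XP YX; split; [exact: (inP X Y) | exact: (main X Y)].
Qed.
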